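(* Let $p>2$ be a prime and let $L$ be a Latin square of order $p$ with parity type $(k,m)$, and let $\mathfrak A(L)$ be its autotopy group. (i) If $k\neq0$ or $m\neq0$, then $p^2$ does not divide $|\mathfrak A(L)|$. (ii) If $k\neq0$ and $m\neq0$, then $p$ does not divide $|\mathfrak A(L)|$. (iii) If the parity type of $L$ is $(0,0)$ but $L$ is not isotopic to the Cayley table of $\mathbb Z_p$, then $p^2$ does not divide $|\mathfrak A(L)|$.
   Context: A Latin square of order $n$ is an $n\times n$ array with entries in $[n]$, each symbol once in each row and column. An isotopism $(\alpha,\beta,\gamma)\in S_n^3$ acts by $(\alpha,\beta,\gamma)(L)=L'$ with $L'(\alpha(r),\beta(c))=\gamma(L(r,c))$; two squares are isotopic if one is mapped to the other by an isotopism. The autotopy group $\mathfrak A(L)$ is $\{\Theta\in S_n^3:\Theta(L)=L\}$. Rows and columns are viewed as permutations: if symbol $i$ appears in the $j$th place of a row (column) $\sigma$, then $\sigma(i)=j$. The parity type of $L$ is $(k,m)$, $0\le k,m\le n/2$, if $k$ of its rows have one sign and the other $n-k$ rows the opposite sign, and $m$ of its columns have one sign and the other $n-m$ columns the opposite sign. *)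

(* Defs.v *)
From mathcomp Require Import all_boot all_fingroup.
Set Implicit Arguments. Unset Strict Implicit. Unset Printing Implicit Defensive.
Local Open Scope group_scope.

Definition square (n : nat) := {ffun 'I_n * 'I_n -> 'I_n}.

Definition latin n (L : square n) : Prop :=
  (forall r, injective (fun c => L (r, c))) /\
  (forall c, injective (fun r => L (r, c))).

Definition row_perm n (L : square n) (r : 'I_n) : option {perm 'I_n} :=
  [pick s : {perm 'I_n} | [forall i, L (r, s i) == i]].
Definition col_perm n (L : square n) (c : 'I_n) : option {perm 'I_n} :=
  [pick s : {perm 'I_n} | [forall i, L (s i, c) == i]].

Definition row_odd n (L : square n) r : bool :=
  if row_perm L r is Some s then odd_perm s else false.
Definition col_odd n (L : square n) c : bool :=
  if col_perm L c is Some s then odd_perm s else false.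

Definition parity_type n (L : square n) : nat * nat :=
  (minn #|[set r | row_odd L r]| #|[set r | ~~ row_odd L r]|,
   minn #|[set c | col_odd L c]| #|[set c | ~~ col_odd L c]|).

Definition isotopism n := ({perm 'I_n} * {perm 'I_n} * {perm 'I_n})%type.

(* (alpha,beta,gamma)(L) = L' with L'(alpha r, beta c) = gamma (L (r, c)). *)
Definition isotope n (t : isotopism n) (L : square n) : square n :=
  let: (a, b, g) := t in
  [ffun rc : 'I_n * 'I_n => g (L (a^-1 rc.1, b^-1 rc.2))].

Definition isotopic n (L L' : square n) : Prop :=
  exists t : isotopism n, isotope t L = L'.

Definition autotopy n (L : square n) : {set isotopism n} :=
  [set t : isotopism n | isotope t L == L].

Lemma ord_pos n (i : 'I_n) : 0 < n.
Proof. by case: i => i /=; apply: leq_ltn_trans. Qed.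

Definition cayley n : square n :=
  [ffun rc : 'I_n * 'I_n =>
     Ordinal (ltn_pmod (rc.1 + rc.2) (ord_pos rc.1))].

(* Main.v *)
Require Import Defs.
From mathcomp Require Import all_boot all_fingroup.
From mathcomp Require pgroup cyclic.
Set Implicit Arguments. Unset Strict Implicit. Unset Printing Implicit Defensive.

Section Main.
Local Open Scope group_scope.
Variable p : nat.
Variable L : square p.
Hypothesis hL : latin L.
Hypothesis pp : prime p.

Lemma autoE (t : isotopism p) :
  (t \in autotopy L) = [forall r, forall c, L (t.1.1 r, t.1.2 c) == t.2 (L (r, c))].
Proof.
case: t => [[a b] g] /=; rewrite inE.
apply/eqP/forallP => [H r|H].
  apply/forallP => c; apply/eqP.
  by rewrite -{1}H ffunE /= !permK.
apply/ffunP => [[x y]]; rewrite ffunE /=.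
by move/forallP: (H (a^-1 x)) => /(_ (b^-1 y)) /eqP <-; rewrite !permKV.
Qed.

Lemma autoP t : t \in autotopy L -> forall r c, L (t.1.1 r, t.1.2 c) = t.2 (L (r, c)).
Proof. by rewrite autoE => /forallP H r c; move/forallP: (H r) => /(_ c) /eqP. Qed.

Lemma auto_group_set : group_set (autotopy L).
Proof.
apply/group_setP; split.
  by rewrite autoE; apply/forallP=> r; apply/forallP=> c /=; rewrite !perm1.
move=> x y /autoP Hx /autoP Hy; rewrite autoE; apply/forallP=> r; apply/forallP=> c.
have -> : (x * y).1.1 = x.1.1 * y.1.1 by [].
have -> : (x * y).1.2 = x.1.2 * y.1.2 by [].
have -> : (x * y).2 = x.2 * y.2 by [].
by rewrite !permM Hy Hx.
Qed.

Canonical AG := Group auto_group_set.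

Lemma row_onto r x : exists c, L (r, c) = x.
Proof. have [f _ Kf] := injF_bij (hL.1 r). by exists (f x); apply: Kf. Qed.
Lemma col_onto c x : exists r, L (r, c) = x.
Proof. have [f _ Kf] := injF_bij (hL.2 c). by exists (f x); apply: Kf. Qed.

Definition r0 : 'I_p := Ordinal (prime_gt0 pp).

Lemma triv_g t : t \in AG -> t.1.1 = 1 -> t.1.2 = 1 -> t.2 = 1.
Proof.
move=> /autoP H ha hb; apply/permP => x; rewrite perm1.
have [c <-] := row_onto r0 x. by rewrite -H ha hb !perm1.
Qed.

Lemma expg11 (t : isotopism p) k : (t ^+ k).1.1 = t.1.1 ^+ k.
Proof. elim: k => [|k IH]; first by []. rewrite !expgS -IH; reflexivity. Qed.
Lemma expg12 (t : isotopism p) k : (t ^+ k).1.2 = t.1.2 ^+ k.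
Proof. elim: k => [|k IH]; first by []. rewrite !expgS -IH; reflexivity. Qed.
Lemma expg2 (t : isotopism p) k : (t ^+ k).2 = t.2 ^+ k.
Proof. elim: k => [|k IH]; first by []. rewrite !expgS -IH; reflexivity. Qed.

Lemma odd_permX (s : {perm 'I_p}) k : odd_perm (s ^+ k) = odd k && odd_perm s.
Proof.
elim: k => [|k IH]; first by rewrite expg0 odd_perm1.
by rewrite expgS odd_permM IH /=; case: (odd_perm s); case: (odd k).
Qed.

Lemma even_of (s : {perm 'I_p}) : odd p -> s ^+ p = 1 -> odd_perm s = false.
Proof.
move=> op sp; have := odd_permX s p; rewrite sp odd_perm1 op /=. by move->.
Qed.

Lemma row_oddE r : row_odd L r = odd_perm (perm (hL.1 r)).
Proof.
have E i : L (r, (perm (hL.1 r))^-1 i) = i.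
  by have := permKV (perm (hL.1 r)) i; rewrite permE.
rewrite /row_odd /row_perm; case: pickP => [s /forallP Hs | H].
  have -> : s = (perm (hL.1 r))^-1; last by rewrite odd_permV.
  by apply/permP => i; apply: (hL.1 r); rewrite /= (eqP (Hs i)) E.
by move: (H (perm (hL.1 r))^-1) => /forallP []; move=> i; rewrite E.
Qed.

Lemma col_oddE c : col_odd L c = odd_perm (perm (hL.2 c)).
Proof.
have E i : L ((perm (hL.2 c))^-1 i, c) = i.
  by have := permKV (perm (hL.2 c)) i; rewrite permE.
rewrite /col_odd /col_perm; case: pickP => [s /forallP Hs | H].
  have -> : s = (perm (hL.2 c))^-1; last by rewrite odd_permV.
  by apply/permP => i; apply: (hL.2 c); rewrite /= (eqP (Hs i)) E.
by move: (H (perm (hL.2 c))^-1) => /forallP []; move=> i; rewrite E.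
Qed.


Lemma orbit_all (s : {perm 'I_p}) : s != 1 -> s ^+ p = 1 ->
  exists x, forall y, exists i, y = (s ^+ i) x.
Proof.
move=> s1 sp.
have [x sx] : exists x, s x != x.
  case: (boolP [exists x, s x != x]) => [/existsP[x hx]|/existsPn H]; first by exists x.
  by case/eqP: s1; apply/permP => x; rewrite perm1; apply/eqP/negPn/H.
exists x => y.
set O := orbit 'P <[s]> x.
have dO : #|O| %| p.
  apply: dvdn_trans (dvdn_orbit _ _ _) _.
  by rewrite -orderE cyclic.order_dvdn sp.
have sxO : s x \in O by have := mem_orbit 'P x (cycle_id s).
have O1 : #|O| != 1%N.
  apply/eqP => /card_orbit1 E; move: sxO; rewrite /O E inE => /eqP; exact/eqP.
have Op : #|O| = p by apply/(prime_nt_dvdP pp O1).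
have : O == setT.
  rewrite eqEcard subsetT cardsT card_ord Op /=.
  exact: leqnn.
move/eqP => OT; have : y \in O by rewrite OT inE.
case/orbitP => a /cycleP [i ->] <-; by exists i.
Qed.

Lemma minn_const (f : pred 'I_p) x : (forall r, f r = f x) ->
  minn #|[set r | f r]| #|[set r | ~~ f r]| = 0.
Proof.
move=> H; case: (boolP (f x)) => hx.
  have -> : [set r | ~~ f r] = set0 by apply/setP=> r; rewrite !inE H hx.
  by rewrite cards0 minn0.
have -> : [set r | f r] = set0 by apply/setP=> r; rewrite !inE H (negbTE hx).
by rewrite cards0 min0n.
Qed.

Lemma rowpar t : odd p -> t \in AG -> #[t] = p -> t.1.1 != 1 -> (parity_type L).1 = 0.
Proof.
move=> op tA ot a1.
have tp : t ^+ p = 1 by move: (expg_order t); rewrite ot.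
have ap : t.1.1 ^+ p = 1 by rewrite -expg11 tp.
have bp : t.1.2 ^+ p = 1 by rewrite -expg12 tp.
have gp : t.2 ^+ p = 1 by rewrite -expg2 tp.
have step r : row_odd L (t.1.1 r) = row_odd L r.
  rewrite !row_oddE.
  have E : t.1.2 * perm (hL.1 (t.1.1 r)) = perm (hL.1 r) * t.2.
    by apply/permP => c; rewrite !permM !permE /= (autoP tA).
  have := congr1 (@odd_perm _) E; rewrite !odd_permM (even_of op bp) (even_of op gp).
  by rewrite /= addbF.
have [x Hx] := orbit_all a1 ap.
rewrite /parity_type /=; apply: (minn_const (x := x)) => r.
have [i ->] := Hx r; elim: i => [|i IH]; first by rewrite expg0 perm1.
by rewrite expgSr permM step.
Qed.

Lemma colpar t : odd p -> t \in AG -> #[t] = p -> t.1.2 != 1 -> (parity_type L).2 = 0.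
Proof.
move=> op tA ot b1.
have tp : t ^+ p = 1 by move: (expg_order t); rewrite ot.
have ap : t.1.1 ^+ p = 1 by rewrite -expg11 tp.
have bp : t.1.2 ^+ p = 1 by rewrite -expg12 tp.
have gp : t.2 ^+ p = 1 by rewrite -expg2 tp.
have step c : col_odd L (t.1.2 c) = col_odd L c.
  rewrite !col_oddE.
  have E : t.1.1 * perm (hL.2 (t.1.2 c)) = perm (hL.2 c) * t.2.
    by apply/permP => r; rewrite !permM !permE /= (autoP tA).
  have := congr1 (@odd_perm _) E; rewrite !odd_permM (even_of op ap) (even_of op gp).
  by rewrite /= addbF.
have [x Hx] := orbit_all b1 bp.
rewrite /parity_type /=; apply: (minn_const (x := x)) => r.
have [i ->] := Hx r; elim: i => [|i IH]; first by rewrite expg0 perm1.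
by rewrite expgSr permM step.
Qed.


Lemma pi1M : {in [set: isotopism p] &, {morph (fun t : isotopism p => t.1.1) : x y / x * y}}.
Proof. by []. Qed.
Definition pi1 := Morphism pi1M.
Lemma pi2M : {in [set: isotopism p] &, {morph (fun t : isotopism p => t.1.2) : x y / x * y}}.
Proof. by []. Qed.
Definition pi2 := Morphism pi2M.
Lemma ker_pi1 t : (t \in 'ker pi1) = (t.1.1 == 1).
Proof. by rewrite !inE. Qed.
Lemma ker_pi2 t : (t \in 'ker pi2) = (t.1.2 == 1).
Proof. by rewrite !inE. Qed.

Lemma not_dvd_fact k : k < p -> ~~ (p %| k`!).
Proof.
elim: k => [|k IH] lt.
  rewrite fact0 dvdn1; apply/eqP => p1; move: (prime_gt1 pp); by rewrite p1.
rewrite factS Euclid_dvdM // negb_or IH ?(ltnW lt) // andbT.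
apply/negP => /(dvdn_leq (ltn0Sn k)); by rewrite leqNgt lt.
Qed.

Lemma p2_fact : ~~ (p ^ 2 %| p`!).
Proof.
have fS : forall q, 0 < q -> q`! = (q * q.-1`!)%N by case => // q _; rewrite factS.
rewrite (fS p (prime_gt0 pp)) expnS expn1 dvdn_pmul2l ?prime_gt0 //.
by apply: not_dvd_fact; rewrite ltn_predL prime_gt0.
Qed.

Lemma kerdiv (f : {morphism [set: isotopism p] >-> {perm 'I_p}}) :
  p ^ 2 %| #|AG| -> p %| #|AG :&: 'ker f|.
Proof.
move=> H.
have EL := LagrangeI AG ('ker f).
have Ei : #|AG : 'ker f| %| p`!.
  have := card_morphim f AG; rewrite setTI => <-.
  rewrite -card_Sn -cardsT; apply: cardSg; exact: subsetT.
apply: contraR (p2_fact) => nd.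
have cop : coprime (p ^ 2) #|AG :&: 'ker f| by rewrite coprimeXl // prime_coprime.
rewrite -EL Gauss_dvdr // in H; exact: dvdn_trans H Ei.
Qed.

Lemma kernel_elt1 : p ^ 2 %| #|autotopy L| -> exists2 t, t \in AG & (#[t] = p /\ t.1.1 = 1).
Proof.
move=> H; have := kerdiv pi1 H; case/(pgroup.Cauchy pp) => t /setIP [tA tK] ot.
by exists t => //; split => //; move: tK; rewrite ker_pi1 => /eqP.
Qed.

Lemma kernel_elt2 : p ^ 2 %| #|autotopy L| -> exists2 t, t \in AG & (#[t] = p /\ t.1.2 = 1).
Proof.
move=> H; have := kerdiv pi2 H; case/(pgroup.Cauchy pp) => t /setIP [tA tK] ot.
by exists t => //; split => //; move: tK; rewrite ker_pi2 => /eqP.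
Qed.

Lemma tn1 (u : isotopism p) : #[u] = p -> u != 1.
Proof.
move=> ou; apply/eqP => u1; move: ou; rewrite u1 order1 => p1.
by move: (prime_gt1 pp); rewrite -p1.
Qed.

Lemma t1 (t : isotopism p) : t.1.1 = 1 -> t.1.2 = 1 -> t.2 = 1 -> t = 1.
Proof. by case: t => [[a b] g] /= -> -> ->. Qed.


Lemma iso_cayley t : t \in AG -> t.1.1 = 1 -> t.1.2 != 1 -> t ^+ p = 1 ->
  isotopic L (cayley p).
Proof.
move=> tA a1 b1 tp.
have bp : t.1.2 ^+ p = 1 by rewrite -expg12 tp.
have gp : t.2 ^+ p = 1 by rewrite -expg2 tp.
have H1 r c : L (r, t.1.2 c) = t.2 (L (r, c)).
  by rewrite -(autoP tA) a1 perm1.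
have H2 j r c : L (r, (t.1.2 ^+ j) c) = (t.2 ^+ j) (L (r, c)).
  elim: j => [|j IH]; first by rewrite !expg0 !perm1.
  by rewrite !expgSr !permM H1 IH.
have [c0 Hc] := orbit_all b1 bp.
have p0 := prime_gt0 pp.
pose h (k : 'I_p) := (t.2 ^+ k) (L (r0, c0)).
have hs y : exists k, h k == y.
  have [c <-] := row_onto r0 y.
  have [j ->] := Hc c.
  by exists (Ordinal (ltn_pmod j p0)); rewrite /h /= (expg_mod _ gp) H2.
pose hi y := xchoose (hs y).
have hiK : cancel hi h by move=> y; exact/eqP/(xchooseP (hs y)).
have hi_inj : injective hi := can_inj hiK.
have [f fK Kf] := injF_bij hi_inj.
have hK : cancel h hi.
  move=> k; have e : h k = f k by rewrite -{1}(Kf k) hiK.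
  by rewrite e Kf.
have Gs0 : val (hi (L (r0, c0))) = 0.
  have : h (Ordinal p0) = L (r0, c0) by rewrite /h expg0 perm1.
  by move=> <-; rewrite hK.
have Gmod j y : val (hi ((t.2 ^+ j) y)) = (j + hi y) %% p.
  rewrite -{1}(hiK y).
  have -> : (t.2 ^+ j) (h (hi y)) = h (Ordinal (ltn_pmod (hi y + j) p0)).
    by rewrite /h /= (expg_mod _ gp) expgD permM.
  by rewrite hK /= addnC.
have A_inj : injective (fun r => hi (L (r, c0))).
  by move=> r r' /hi_inj /(hL.2 c0).
have B_inj : injective (fun c => hi (L (r0, c))).
  by move=> c c' /hi_inj /(hL.1 r0).
have key r c : val (hi (L (r, c))) = (hi (L (r, c0)) + hi (L (r0, c))) %% p.
  have [j ->] := Hc c.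
  by rewrite !H2 !Gmod Gs0 addn0 modnDmr addnC.
exists (perm A_inj, perm B_inj, perm hi_inj).
apply/ffunP => [[x y]]; rewrite !ffunE /=; apply: val_inj => /=.
rewrite permE key.
have EA : hi (L ((perm A_inj)^-1 x, c0)) = x.
  by have := permKV (perm A_inj) x; rewrite permE.
have EB : hi (L (r0, (perm B_inj)^-1 y)) = y.
  by have := permKV (perm B_inj) y; rewrite permE.
by rewrite EA EB.
Qed.

Lemma b_ne1 t : t \in AG -> #[t] = p -> t.1.1 = 1 -> t.1.2 != 1.
Proof.
move=> tA ot a1; apply/eqP => b1.
by have := tn1 ot; rewrite (t1 a1 b1 (triv_g tA a1 b1)) eqxx.
Qed.

Lemma a_ne1 t : t \in AG -> #[t] = p -> t.1.2 = 1 -> t.1.1 != 1.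
Proof.
move=> tA ot b1; apply/eqP => a1.
by have := tn1 ot; rewrite (t1 a1 b1 (triv_g tA a1 b1)) eqxx.
Qed.

Lemma part_i : odd p -> (p ^ 2 %| #|autotopy L|)%N -> parity_type L = (0, 0)%N.
Proof.
move=> op H.
have [t tA [ot a1]] := kernel_elt1 H.
have [u uA [ou b1]] := kernel_elt2 H.
have m0 := colpar op tA ot (b_ne1 tA ot a1).
have k0 := rowpar op uA ou (a_ne1 uA ou b1).
by move: k0 m0; case: (parity_type L) => k m /= -> ->.
Qed.

Lemma part_ii : odd p -> (p %| #|autotopy L|)%N ->
  (parity_type L).1 = 0%N \/ (parity_type L).2 = 0%N.
Proof.
move=> op H.
have [t tA ot] := pgroup.Cauchy pp H.
case: (eqVneq t.1.1 1) => a1; last by left; exact: rowpar op tA ot a1.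
by right; exact: colpar op tA ot (b_ne1 tA ot a1).
Qed.

Lemma part_iii : (p ^ 2 %| #|autotopy L|)%N -> isotopic L (cayley p).
Proof.
move=> H; have [t tA [ot a1]] := kernel_elt1 H.
apply: (iso_cayley tA a1 (b_ne1 tA ot a1)).
by move: (expg_order t); rewrite ot.
Qed.

End Main.

Theorem corollary4p1 (p : nat) (L : square p) :
  prime p -> 2 < p -> latin L ->
  [/\ ((parity_type L).1 != 0 \/ (parity_type L).2 != 0) ->
        ~~ (p ^ 2 %| #|autotopy L|),
      ((parity_type L).1 != 0 /\ (parity_type L).2 != 0) ->
        ~~ (p %| #|autotopy L|)
    & (parity_type L = (0, 0) -> ~ isotopic L (cayley p) ->
        ~~ (p ^ 2 %| #|autotopy L|))].
Proof.
move=> pp p2 hL.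
have op : odd p by case: (even_prime pp) => // p2'; rewrite p2' in p2.
split.
- move=> hk; apply/negP => H; move: hk; rewrite (part_i hL pp op H) /=.
  by case.
- move=> [hk hm]; apply/negP => H.
  by case: (part_ii hL pp op H) => E; [move: hk | move: hm]; rewrite E eqxx.
- move=> _ niso; apply/negP => H; exact: niso (part_iii hL pp H).
Qed.
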